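(* Let $k\ge1$ and let $e_1,\dots,e_k,f_1,\dots,f_k$ be integers such that $e_1,e_2+1,\dots,e_k+k-1$ are distinct nonnegative integers and $f_1,f_2+1,\dots,f_k+k-1$ are distinct elements of $\{0,1,\dots,2k-1\}$. Let $c_1<c_2<\cdots<c_k$ be the elements of the complement $\{0,1,\dots,2k-1\}\setminus\{f_1,f_2+1,\dots,f_k+k-1\}$. Let $D$ be the $2k\times 2k$ determinant with entries, for $1\le i\le k$, $1\le j\le 2k$, $$D_{ij}=\Gamma(2k-i-j+2-e_i)^{-1},\qquad D_{k+i,j}=(-1)^{i+j-1}\Gamma(2k-i-j+2-f_i)^{-1}$$ (with $1/\Gamma(m)=0$ for $m\in\{0,-1,-2,\dots\}$). Then $$D=\operatorname{sgn}(f)\Bigl(\prod_{l=0}^{k-1}\frac{(e_{l+1}+l)!\,(f_{l+1}+l)!}{l!\,(k+l)!}\,2^{c_{l+1}-e_{l+1}-l}\Bigr)\det\Bigl(\binom{c_j}{e_i+i-1}\Bigr)_{1\le i,j\le k},$$ where $\operatorname{sgn}(f)$ is $(-1)$ raised to the number of transpositions needed to sort $f_1+1,f_2+2,\dots,f_k+k$ into increasing order. *)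

(* Defs.v *)
From HB Require Import structures.
From mathcomp Require Import all_boot all_order all_algebra.
Set Implicit Arguments. Unset Strict Implicit. Unset Printing Implicit Defensive.
Import Order.TTheory GRing.Theory Num.Theory.
Local Open Scope ring_scope.

Definition invGamma (R : numFieldType) (m : int) : R :=
  if (0 < m)%R then (((absz m).-1)`!)%:R^-1 else 0.

(* shifted sequence a_i + i (0-based index i, corresponding to a_{i+1}+i) *)
Definition shift (k : nat) (a : 'I_k -> int) (i : 'I_k) : int := a i + (i : nat)%:Z.

Definition compl_seq (k : nat) (f : 'I_k -> int) : seq nat :=
  [seq c <- iota 0 (k + k) | (c%:Z) \notin [seq shift f i | i <- enum 'I_k]].

Definition ninv (k : nat) (f : 'I_k -> int) : nat :=
  #|[set p : 'I_k * 'I_k | (p.1 < p.2)%N && (shift f p.2 < shift f p.1)]|.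

Definition sgnf (R : numFieldType) (k : nat) (f : 'I_k -> int) : R :=
  (-1) ^+ ninv f.

(* The 2k x 2k matrix D, 0-based indices: rows i < k give
   D_{i+1,j+1} = 1/Gamma(2k - i - j - e_{i+1}); rows k+i give
   (-1)^(i+j+1) / Gamma(2k - i - j - f_{i+1}). *)
Definition Dmat (R : numFieldType) (k : nat) (e f : 'I_k -> int) : 'M[R]_(k + k) :=
  col_mx
    (\matrix_(i < k, j < k + k)
       invGamma R ((k + k)%:Z - (i : nat)%:Z - (j : nat)%:Z - e i))
    (\matrix_(i < k, j < k + k)
       ((-1) ^+ (i + j + 1)%N *
        invGamma R ((k + k)%:Z - (i : nat)%:Z - (j : nat)%:Z - f i))).

(* Main.v *)
Require Import Defs.
From HB Require Import structures.
From mathcomp Require Import all_boot all_order all_algebra ring zify.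
From mathcomp Require Import perm.
Set Implicit Arguments. Unset Strict Implicit. Unset Printing Implicit Defensive.
Import Order.TTheory GRing.Theory Num.Theory.
Local Open Scope ring_scope.

Lemma sum_lt_nat (n x : nat) : (x <= n)%N -> (\sum_(y < n) (y < x))%N = x.
Proof.
move=> xn; rewrite -(big_mkord xpredT (fun y => nat_of_bool (y < x)%N)).
rewrite (big_cat_nat (leq0n x) xn) /=.
rewrite big_nat_cond (eq_bigr (fun=> 1%N)); last by move=> i /andP[/andP[_ ->]].
rewrite -big_nat_cond sum_nat_const_nat muln1 subn0.
rewrite big_nat_cond big1 ?addn0 // => i /andP[/andP[+ _] _].
by rewrite leqNgt => /negbTE ->.
Qed.

Lemma bin_mul m X a : (a <= X)%N -> (X <= m)%N ->
  ('C(m,X) * 'C(X,a) = 'C(m,a) * 'C(m-a, X-a))%N.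
Proof.
move=> aX Xm.
apply/eqP; rewrite -(eqn_pmul2r (_ : 0 < a`! * (X-a)`! * (m-X)`!)%N) ?muln_gt0 ?fact_gt0 //.
have E1 := bin_fact aX.
have E2 := bin_fact Xm.
have E3 := bin_fact (leq_trans aX Xm).
have E4 := bin_fact (leq_sub2r a Xm).
have E5 : (m - a - (X - a) = m - X)%N by lia.
rewrite E5 in E4.
have -> : ('C(m, X) * 'C(X, a) * (a`! * (X - a)`! * (m - X)`!) = 'C(m, X) * ('C(X, a) * (a`! * (X - a)`!)) * (m - X)`!)%N by ring.
rewrite E1.
have -> : ('C(m, a) * 'C(m - a, X - a) * (a`! * (X - a)`! * (m - X)`!) = 'C(m, a) * a`! * ('C(m - a, X - a) * ((X - a)`! * (m - X)`!)))%N by ring.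
rewrite E4 -mulnA -mulnA E2 -E3. done.
Qed.

Lemma binsum (R : comPzRingType) (N m a : nat) : (m < N)%N ->
  \sum_(X < N) (2:R)^+X * 'C(X,a)%:R * ((-1)^+(m-X) * 'C(m,X)%:R) = 2^+a * 'C(m,a)%:R.
Proof.
move=> mN.
rewrite -(big_mkord xpredT (fun X => (2:R)^+X * 'C(X,a)%:R * ((-1)^+(m-X) * 'C(m,X)%:R))).
rewrite (big_cat_nat (leq0n m.+1) mN) /= [X in _ + X]big_nat_cond [X in _ + X]big1 ?addr0; last first.
  by move=> X /andP[/andP[H _] _]; rewrite (@bin_small m X) // mulr0 mulr0.
case: (leqP a m) => am; last first.
  rewrite (@bin_small m a) // mulr0 big_nat_cond big1 // => X /andP[/andP[_ H] _].
  by rewrite (@bin_small X a) ?mulr0 ?mul0r // (leq_trans H am).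
rewrite (big_cat_nat (leq0n a) (leq_trans am (leqnSn m))) /= [X in X + _]big_nat_cond [X in X + _]big1 ?add0r; last first.
  by move=> X /andP[/andP[_ H] _]; rewrite (@bin_small X a) // mulr0 mul0r.
rewrite -{1}(add0n a) big_addn subSn // big_mkord.
have h2 : (-1 + 2 : R) = 1 by ring.
have E : \sum_(t < (m-a).+1) (-1)^+(m-a-t) * 2^+t *+ 'C(m-a,t) = 1 :> R.
  by rewrite -exprDn h2 expr1n.
apply: (@eq_trans _ _ (2^+a * 'C(m,a)%:R * \sum_(t < (m-a).+1) (-1)^+(m-a-t) * 2^+t *+ 'C(m-a,t))); last by rewrite E mulr1.
rewrite big_distrr /=; apply: eq_bigr => t _.
have tm : (a + t <= m)%N by move: (ltn_ord t); lia.
have HH := @bin_mul m (a + t) a (leq_addr t a) tm.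
rewrite [(t + a)%N]addnC exprD -[X in _ = _ * X]mulr_natr.
have -> : (m - (a + t) = m - a - t)%N by lia.
rewrite (_ : (a + t - a = t)%N) in HH; last by lia.
have : ('C(a + t, a) * 'C(m, a + t))%:R = ('C(m, a) * 'C(m - a, t))%:R :> R by rewrite mulnC HH.
rewrite !natrM => E2.
transitivity (2 ^+ a * 2 ^+ t * (-1) ^+ (m - a - t) * ('C(a + t, a)%:R * 'C(m, a + t)%:R) : R); first ring.
rewrite E2; ring.
Qed.

Lemma fact_neq0 (R : numFieldType) m : (m`!)%:R != 0 :> R.
Proof. by rewrite pnatr_eq0 -lt0n fact_gt0. Qed.

Lemma invGamma_eval (R : numFieldType) (m a : nat) :
  invGamma R ((m.+1)%:Z - (a)%:Z) = (a`!)%:R * 'C(m,a)%:R / (m`!)%:R.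
Proof.
rewrite /invGamma; case: (leqP a m) => am.
  have -> : (m.+1)%:Z - a%:Z = ((m - a).+1)%:Z by lia.
  rewrite ltz_nat /= -(bin_fact am) !natrM.
  have h1 := fact_neq0 R a; have h2 := fact_neq0 R (m - a).
  have h3 : 'C(m, a)%:R != 0 :> R by rewrite pnatr_eq0 -lt0n bin_gt0.
  by field; rewrite h1 h2 h3.
have -> : (0 < (m.+1)%:Z - a%:Z) = false by apply/negbTE; lia.
by rewrite bin_small // mulr0 mul0r.
Qed.

Lemma sign_eq (R : numFieldType) x y z : (x + y = z.*2)%N -> (-1)^+x = (-1)^+y :> R.
Proof.
move=> H; rewrite -signr_odd -[RHS]signr_odd; congr (_ ^+ _).
by have := congr1 odd H; rewrite oddD odd_double; case: (odd x); case: (odd y).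
Qed.

Lemma pair_swap (R : comPzRingType) p (F : 'I_p -> 'I_p -> R) :
  \prod_(i < p) \prod_(j < p | (j < i)%N) F i j =
  \prod_(i < p) \prod_(j < p | (i < j)%N) F j i.
Proof. by rewrite (exchange_big_dep xpredT). Qed.

Lemma prod_full (R : comPzRingType) p (F : 'I_p -> 'I_p -> R) :
  \prod_(i < p) \prod_(j < p | i != j) F i j =
  \prod_(i < p) \prod_(j < p | (i < j)%N) (F i j * F j i).
Proof.
transitivity (\prod_(i < p) (\prod_(j < p | (i < j)%N) F i j * \prod_(j < p | (j < i)%N) F i j)).
  apply: eq_bigr => i _; rewrite (bigID (fun j : 'I_p => (i < j)%N)) /=.
  congr (_ * _); apply: eq_bigl => j.
    by rewrite -val_eqE /=; case: ltngtP.
  by rewrite -val_eqE /=; case: ltngtP.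
rewrite big_split /= pair_swap -big_split /=.
by apply: eq_bigr => i _; rewrite -big_split.
Qed.

Lemma prod_abs_perm (R : numFieldType) p (h : 'I_p -> 'I_p) : injective h ->
  \prod_(i < p) \prod_(j < p | (i < j)%N) `|(h i : nat)%:R - (h j : nat)%:R|
  = \prod_(i < p) \prod_(j < p | (i < j)%N) `|(i : nat)%:R - (j : nat)%:R| :> R.
Proof.
move=> hinj.
pose G := fun x y : 'I_p => `|(x : nat)%:R - (y : nat)%:R| : R.
have full : forall g : 'I_p -> 'I_p, \prod_(i < p) \prod_(j < p | i != j) G (g i) (g j)
    = (\prod_(i < p) \prod_(j < p | (i < j)%N) G (g i) (g j)) ^+ 2.
  move=> g; rewrite prod_full -prodrXl; apply: eq_bigr => i _.
  rewrite -prodrXl; apply: eq_bigr => j _; by rewrite /G distrC expr2.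
have e : \prod_(i < p) \prod_(j < p | i != j) G (h i) (h j) = \prod_(i < p) \prod_(j < p | i != j) G i j.
  rewrite [RHS](reindex_inj hinj); apply: eq_bigr => i _.
  rewrite [RHS](reindex_inj hinj); apply: eq_bigl => j; by rewrite (inj_eq hinj).
move: e; rewrite (full h) (full id) => /eqP; rewrite eqrXn2 //.
  by move/eqP.
all: by apply: prodr_ge0 => i _; apply: prodr_ge0 => j _; apply: normr_ge0.
Qed.

Lemma prod_if (R : pzRingType) p (P : pred 'I_p) :
  \prod_(i < p) (if P i then -1 else 1) = (-1)^+(\sum_(i < p) P i) :> R.
Proof. by rewrite -prodrXr; apply: eq_bigr => i _; case: (P i). Qed.

Lemma prod_m1_pairs (R : comPzRingType) p :
  \prod_(i < p) \prod_(j < p | (i < j)%N) (-1 : R) = \prod_(j < p) (-1)^+j.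
Proof.
rewrite -(pair_swap (fun _ _ => -1 : R)); apply: eq_bigr => i _.
rewrite big_mkcond /= prod_if sum_lt_nat //; exact: ltnW.
Qed.

Lemma splitL p q (j : 'I_p) : split (lshift q j) = inl j.
Proof. exact: (unsplitK (@inl _ 'I_q j)). Qed.
Lemma splitR p q (i : 'I_q) : split (rshift p i) = inr i.
Proof. exact: (unsplitK (@inr 'I_p _ i)). Qed.

Section Main.
Variables (R : numFieldType) (k : nat) (e f : 'I_k -> int).
Hypotheses (e0 : forall i, 0 <= shift e i)
  (fb : forall i, 0 <= shift f i < (k + k)%:Z) (finj : injective (shift f)).

Local Notation n := (k + k)%N.
Definition a i : nat := absz (shift e i).
Definition b i : nat := absz (shift f i).

Lemma aE i : (a i)%:Z = shift e i.
Proof. by rewrite /a gez0_abs. Qed.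
Lemma bE i : (b i)%:Z = shift f i.
Proof. by rewrite /b gez0_abs //; case/andP: (fb i). Qed.
Lemma b_lt i : (b i < n)%N.
Proof. by rewrite -ltz_nat bE; case/andP: (fb i). Qed.
Lemma b_inj : injective b.
Proof. by move=> i j /(congr1 Posz); rewrite !bE => /finj. Qed.

Definition Bl := [seq b i | i <- enum 'I_k].

Lemma compl_seqE : compl_seq f = [seq x <- iota 0 n | x \notin Bl].
Proof.
rewrite /compl_seq; apply: eq_filter => x; congr negb.
apply/mapP/mapP => -[i Hi Hx]; exists i => //.
  by apply/eqP; rewrite -eqz_nat bE Hx.
by rewrite Hx bE.
Qed.

Lemma Bl_uniq : uniq Bl.
Proof. by rewrite map_inj_uniq ?enum_uniq //; apply: b_inj. Qed.

Lemma size_cs : size (compl_seq f) = k.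
Proof.
have P : perm_eq [seq x <- iota 0 n | x \in Bl] Bl.
  apply: uniq_perm; rewrite ?filter_uniq ?iota_uniq ?Bl_uniq // => x.
  rewrite mem_filter mem_iota /= add0n; apply/andP/idP => [[]//|xB]; split=>//.
  by case/mapP: xB => i _ ->; apply: b_lt.
move/perm_size: P; rewrite size_filter size_map size_enum_ord compl_seqE size_filter.
move=> H; have := count_predC (mem Bl) (iota 0 n).
by rewrite size_iota H => /eqP; rewrite -{2}(addn0 k) -addnA eqn_add2l add0n => /eqP.
Qed.

Definition c (j : 'I_k) : nat := nth 0%N (compl_seq f) j.

Lemma c_in j : c j \in compl_seq f.
Proof. by rewrite /c mem_nth // size_cs. Qed.
Lemma c_lt j : (c j < n)%N.
Proof. by have := c_in j; rewrite compl_seqE mem_filter mem_iota add0n => /andP[]. Qed.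
Lemma c_notb j i : c j != b i.
Proof.
have := c_in j; rewrite compl_seqE mem_filter => /andP[H _].
by apply: contraNneq H => ->; apply: map_f; rewrite mem_enum.
Qed.
Lemma c_mono (j j' : 'I_k) : (j < j')%N -> (c j < c j')%N.
Proof.
move=> H; rewrite /c; apply: (sorted_ltn_nth ltn_trans) => //; rewrite ?inE ?size_cs //.
by rewrite compl_seqE; apply: sorted_filter; [apply: ltn_trans|apply: iota_ltn_sorted].
Qed.
Lemma c_inj : injective c.
Proof.
move=> j j' H; apply/eqP; rewrite -val_eqE; case: (ltngtP j j') => // /c_mono;
by rewrite H ltnn.
Qed.

Definition tau' (u : 'I_k + 'I_k) : nat := match u with inl j => c j | inr i => b i end.
Definition tau (r : 'I_n) : nat := tau' (split r).

Lemma tau_lt r : (tau r < n)%N.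
Proof. by rewrite /tau; case: (split r) => /= x; rewrite ?c_lt ?b_lt. Qed.
Lemma tau'_inj : injective tau'.
Proof.
move=> [j|i] [j'|i'] /= H.
- by rewrite (c_inj H).
- by move: (c_notb j i'); rewrite H eqxx.
- by move: (c_notb j' i); rewrite H eqxx.
- by rewrite (b_inj H).
Qed.
Lemma tau_inj : injective tau.
Proof. by move=> r r' /tau'_inj /(can_inj (@splitK _ _)). Qed.
Lemma tauL j : tau (lshift k j) = c j.
Proof. by rewrite /tau (unsplitK (@inl _ 'I_k j)). Qed.
Lemma tauR i : tau (rshift k i) = b i.
Proof. by rewrite /tau (unsplitK (@inr 'I_k _ i)). Qed.

Definition tauo (r : 'I_n) : 'I_n := Ordinal (tau_lt r).
Lemma tauo_inj : injective tauo.
Proof. by move=> r r' /(congr1 val) /tau_inj. Qed.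

Lemma count_tau x : (x <= n)%N -> (\sum_(r < n) (tau r < x))%N = x.
Proof.
move=> xn; rewrite -{2}(sum_lt_nat xn) [RHS](reindex_inj tauo_inj) /=.
by [].
Qed.

Lemma count_b i : ((\sum_(j < k) (c j < b i)) + \sum_(i' < k) (b i' < b i))%N = b i.
Proof.
rewrite -{3}(count_tau (ltnW (b_lt i))) big_split_ord /=.
by congr addn; apply: eq_bigr => r _; rewrite ?tauL ?tauR.
Qed.

Definition u (X m : nat) : R := (-1)^+(m - X) * 'C(m,X)%:R / (m`!)%:R.
Definition W : 'M[R]_n := \matrix_(x, j) u (rev_ord x) (rev_ord j).
Definition Xm : 'M[R]_(k, n) :=
  \matrix_(i, x) ((a i)`!%:R * 'C(rev_ord x, a i)%:R * 2^+(rev_ord x) / 2^+(a i)).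
Definition Ym : 'M[R]_(k, n) :=
  \matrix_(i, x) ((-1)^+(i + b i) * (b i)`!%:R * ((rev_ord x : nat) == b i)%:R).
Definition N := col_mx Xm Ym.

Lemma D_fact : Dmat R e f = N *m W.
Proof.
rewrite /N mul_col_mx; congr col_mx; apply/matrixP => i j; rewrite !mxE.
  under eq_bigr do rewrite !mxE.
  rewrite [RHS](reindex_inj rev_ord_inj).
  under eq_bigr do rewrite rev_ordK.
  set m := (rev_ord j : nat).
  have -> : (k + k)%:Z - i%:Z - j%:Z - e i = (m.+1)%:Z - (a i)%:Z.
    rewrite aE /shift /m /=; have := ltn_ord j; lia.
  rewrite invGamma_eval.
  have h2 : (2 : R) ^+ a i != 0 by rewrite expf_neq0 // pnatr_eq0.
  have hm := fact_neq0 R m.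
  transitivity ((a i)`!%:R / 2^+(a i) / (m`!)%:R *
     \sum_(X < n) (2:R)^+X * 'C(X, a i)%:R * ((-1)^+(m-X) * 'C(m,X)%:R)).
    rewrite binsum ?ltn_ord //; field; by rewrite h2 hm.
  rewrite big_distrr /=; apply: eq_bigr => x _; rewrite /u; field; by rewrite h2 hm.
under eq_bigr do rewrite !mxE.
rewrite [RHS](reindex_inj rev_ord_inj).
under eq_bigr do rewrite rev_ordK.
rewrite (bigD1 (Ordinal (b_lt i))) //= eqxx big1 ?addr0; last first.
  move=> x /negbTE; rewrite -val_eqE /= => ->; by rewrite !mulr0 mul0r.
rewrite /u /=; set m := (n - j.+1)%N.
have -> : (k + k)%:Z - i%:Z - j%:Z - f i = (m.+1)%:Z - (b i)%:Z.
  rewrite bE /shift /m /=; have := ltn_ord j; lia.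
rewrite invGamma_eval.
case: (leqP (b i) m) => bm; last by rewrite (@bin_small m (b i)) // !(mulr0, mul0r).
rewrite mulr1 (@sign_eq R (i + j + 1) (i + b i + (m - b i)) (i + k)%N); last first.
  move: bm; rewrite /m -addnn; have := ltn_ord j; lia.
rewrite exprD; ring.
Qed.
Lemma W_trig : is_trig_mx W.
Proof.
apply/is_trig_mxP => x j xj; rewrite mxE /u (@bin_small (rev_ord j) (rev_ord x)) ?mulr0 ?mul0r //.
rewrite /=; move: (ltn_ord j) (ltn_ord x) xj; lia.
Qed.

Lemma detW : \det W = (\prod_(m < n) (m`!)%:R)^-1.
Proof.
rewrite det_trig ?W_trig // -prodfV [RHS](reindex_inj rev_ord_inj).
by apply: eq_bigr => j _; rewrite mxE /u subnn binn expr0 !mul1r.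
Qed.

Lemma prod_fact : \prod_(m < n) (m`!)%:R = \prod_(l < k) ((l`! * (k + l)`!)%:R) :> R.
Proof.
rewrite big_split_ord [RHS](eq_bigr (fun l : 'I_k => (l`!)%:R * ((k + l)`!)%:R)).
  by rewrite big_split.
by move=> l _; rewrite natrM.
Qed.

Definition sigf (r : 'I_n) : 'I_n := rev_ord (tauo r).
Lemma sigf_inj : injective sigf.
Proof. by move=> r r' /rev_ord_inj /tauo_inj. Qed.
Definition sig : {perm 'I_n} := perm sigf_inj.
Definition B := col_perm sig N.

Lemma detB : \det B = \det N * (-1)^+ sig.
Proof. by rewrite /B col_permE det_mulmx det_perm odd_permV. Qed.

Lemma B_dl : dlsubmx B = 0.
Proof.
apply/matrixP => i j; rewrite !mxE splitR mxE permE /sigf rev_ordK /= tauL.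
by rewrite (negbTE (c_notb j i)) mulr0.
Qed.

Lemma det_dr : \det (drsubmx B) = \prod_(i < k) ((-1)^+(i + b i) * (b i)`!%:R).
Proof.
rewrite det_trig.
  by apply: eq_bigr => i _; rewrite !mxE splitR mxE permE /sigf rev_ordK /= tauR eqxx mulr1.
apply/is_trig_mxP => i j ij; rewrite !mxE splitR mxE permE /sigf rev_ordK /= tauR.
have : b j != b i by apply/eqP => /b_inj H; move: ij; rewrite H ltnn.
by move/negbTE => ->; rewrite mulr0.
Qed.

Lemma det_scale_rc (p : nat) (r s : 'I_p -> R) (A : 'M[R]_p) :
  \det (\matrix_(i, j) (r i * A i j * s j)) = \prod_i r i * \prod_j s j * \det A.
Proof.
have -> : \matrix_(i, j) (r i * A i j * s j) = diag_mx (\row_i r i) *m A *m diag_mx (\row_j s j).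
  by rewrite mul_diag_mx mul_mx_diag; apply/matrixP => i j; rewrite !mxE.
rewrite !det_mulmx !det_diag.
rewrite (eq_bigr r) => [|i _]; last by rewrite mxE.
rewrite [X in _ * X](eq_bigr s) => [|i _]; last by rewrite mxE.
by rewrite mulrAC.
Qed.

Lemma det_ul : \det (ulsubmx B) = \prod_(i < k) ((a i)`!%:R / 2^+(a i)) * \prod_(j < k) (2:R)^+(c j) *
   \det (\matrix_(i < k, j < k) ('C(c j, a i))%:R : 'M[R]_k).
Proof.
rewrite -det_scale_rc; congr (\det _); apply/matrixP => i j.
rewrite !mxE splitL mxE permE /sigf rev_ordK /= tauL.
ring.
Qed.
Definition g (i j : 'I_k) : R := if (b j < b i)%N then -1 else 1.

Lemma ninv_sign : (-1)^+(ninv f) = \prod_(i < k) \prod_(j < k | (i < j)%N) g i j.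
Proof.
transitivity (\prod_(p : 'I_k * 'I_k)
   (if (p.1 < p.2)%N && (b p.2 < b p.1)%N then -1 else 1 : R)).
  rewrite /ninv -prodr_const big_mkcond /=; apply: eq_bigr => p _.
  by rewrite inE -!bE ltz_nat.
rewrite -(pair_bigA _ (fun (i j : 'I_k) => if (i < j)%N && (b j < b i)%N then -1 else 1 : R)) /=.
apply: eq_bigr => i _; rewrite [RHS]big_mkcond /=; apply: eq_bigr => j _.
by rewrite /g; case: (i < j)%N; case: (b j < b i)%N.
Qed.

Definition s (i j : 'I_n) : R := if (tau j < tau i)%N then 1 else -1.

Lemma T2_val : \prod_(i < k) \prod_(j < k) (if (b j < c i)%N then 1 else -1 : R)
  = \prod_(l < k) (-1)^+(l + b l).
Proof.
rewrite exchange_big /=.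
transitivity (\prod_(j < k) ((-1)^+(b j) * (-1)^+(\sum_(i' < k) (b i' < b j)) : R)).
  apply: eq_bigr => j _.
  transitivity (\prod_(i < k) (if (c i < b j)%N then -1 else 1 : R)).
    apply: eq_bigr => i _; have := c_notb i j.
    by case: ltngtP => // _ _; rewrite ltnNge ?ltnW.
  rewrite prod_if -exprD; apply: (@sign_eq _ _ _ (b j)).
  by rewrite addnCA count_b addnn.
rewrite big_split /= [RHS](eq_bigr (fun l : 'I_k => (-1)^+(b l) * (-1)^+(nat_of_ord l) : R)); last first.
  by move=> l _; rewrite exprD mulrC.
rewrite big_split /=; congr (_ * _).
transitivity (\prod_(j < k) \prod_(i' < k) g j i').
  by apply: eq_bigr => j _; rewrite -prod_if.
transitivity (\prod_(j < k) \prod_(i' < k | j != i') g j i').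
  apply: eq_bigr => j _; rewrite [LHS](bigID (fun i' => j != i')) /=.
  rewrite [X in _ * X]big1 ?mulr1 // => i' /negPn /eqP <-.
  by rewrite /g ltnn.
rewrite prod_full -prod_m1_pairs; apply: eq_bigr => j _; apply: eq_bigr => i' ji'.
have : b j != b i' by apply/eqP => /b_inj H; move: ji'; rewrite H ltnn.
rewrite /g; case: (ltngtP (b j) (b i')) => // _ _; by rewrite ?mulr1 ?mul1r.
Qed.
Lemma S_val : \prod_(i < n) \prod_(j < n | (i < j)%N) s i j
  = (-1)^+(ninv f) * \prod_(l < k) (-1)^+(l + b l).
Proof.
have E1 : forall i : 'I_k, \prod_(j < n | (lshift k i < j)%N) s (lshift k i) j
   = \prod_(j < k | (i < j)%N) (-1 : R) * \prod_(j < k) (if (b j < c i)%N then 1 else -1 : R).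
  move=> i; rewrite big_split_ord; congr (_ * _).
    apply: eq_big => [j|j ij] //=.
    by rewrite /s tauL tauL ltnNge (ltnW (c_mono ij)).
  apply: eq_big => [j|j _].
    by rewrite /= (leq_trans (ltn_ord i) (leq_addr j k)).
  by rewrite /s tauL tauR.
have E2 : forall i : 'I_k, \prod_(j < n | (rshift k i < j)%N) s (rshift k i) j
   = \prod_(j < k | (i < j)%N) (-1 * g i j).
  move=> i; rewrite big_split_ord big_pred0; last first.
    by move=> j; rewrite /= ltnNge (leq_trans (ltnW (ltn_ord j)) (leq_addr i k)).
  rewrite Monoid.mul1m.
  apply: eq_big => [j|j ij]; first by rewrite /= ltn_add2l.
  by rewrite /s tauR tauR /g; case: ifP; rewrite ?mulN1r ?opprK ?mulr1.
have bso : forall F : 'I_n -> R, \prod_(i < n) F i = \prod_(i < k) F (lshift k i) * \prod_(i < k) F (rshift k i).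
  by move=> F; rewrite big_split_ord.
rewrite bso.
under eq_bigr do rewrite E1.
under [X in _ * X]eq_bigr do rewrite E2.
rewrite big_split /=.
under [X in _ * X]eq_bigr do rewrite big_split /=.
rewrite [X in _ * X]big_split /= T2_val -ninv_sign.
set A := \prod_(i < k) \prod_(j < k | (i < j)%N) (-1 : R).
have hA : A * A = 1.
  rewrite /A -big_split /= big1 // => i _.
  by rewrite -big_split /= big1 // => j _; rewrite mulrNN mulr1.
set T := \prod_(l < k) (-1)^+(l + b l).
set G := (-1)^+(ninv f).
have -> : A * T * (A * G) = (A * A) * (G * T) by ring.
by rewrite hA mul1r.
Qed.

Lemma sig_sign : (-1)^+sig = \prod_(i < n) \prod_(j < n | (i < j)%N) s i j :> R.
Proof.
pose a0 := \row_(x < n) ((x : nat)%:R : R).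
pose a1 := \row_(x < n) ((sig x : nat)%:R : R).
have HV : Vandermonde n a1 = col_perm sig (Vandermonde n a0).
  by apply/matrixP => i j; rewrite !mxE.
have := det_Vandermonde a1; rewrite HV col_permE det_mulmx det_perm odd_permV det_Vandermonde.
set P0 := \prod_(i < n) \prod_(j < n | (i < j)%N) (a0 0 j - a0 0 i).
move=> H.
have P0ne : P0 != 0.
  apply/prodf_neq0 => i _; apply/prodf_neq0 => j ij.
  by rewrite !mxE subr_eq0 eqr_nat; apply: contraTneq ij => ->; rewrite ltnn.
have E : \prod_(i < n) \prod_(j < n | (i < j)%N) (a1 0 j - a1 0 i)
    = (\prod_(i < n) \prod_(j < n | (i < j)%N) s i j) * P0.
  transitivity (\prod_(i < n) \prod_(j < n | (i < j)%N)
      (s i j * `|((tauo i : nat)%:R : R) - (tauo j : nat)%:R|)).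
    apply: eq_bigr => i _; apply: eq_bigr => j ij.
    rewrite !mxE !permE /sigf /=.
    have ti := tau_lt i; have tj := tau_lt j.
    have -> : ((n - (tau j).+1)%:R - (n - (tau i).+1)%:R : R) = (tau i)%:R - (tau j)%:R.
      by rewrite !natrB // !mulrS; ring.
    rewrite /s; case: (ltngtP (tau i) (tau j)) => h.
    - have hlt : ((tau i)%:R - (tau j)%:R : R) < 0 by rewrite subr_lt0 ltr_nat.
      by rewrite (ltr0_norm hlt) mulN1r opprK.
    - have hlt : (0 : R) <= (tau i)%:R - (tau j)%:R by rewrite subr_ge0 ler_nat ltnW.
      by rewrite (ger0_norm hlt) mul1r.
    - by move/tau_inj: h ij => ->; rewrite ltnn.
  under eq_bigr do rewrite big_split /=.
  rewrite big_split /= (@prod_abs_perm R _ _ tauo_inj); congr (_ * _).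
  apply: eq_bigr => i _; apply: eq_bigr => j ij; rewrite !mxE distrC ger0_norm //.
  by rewrite subr_ge0 ler_nat ltnW.
rewrite E [RHS]mulrC in H.
by apply: (mulfI P0ne).
Qed.
Lemma main_sec : \det (Dmat R e f) =
  (-1)^+(ninv f) *
  (\prod_(l < k) ((((a l)`! * (b l)`!)%:R / ((l`! * (k + l)`!)%:R : R))
      * (2 : R) ^ ((c l)%:Z - shift e l)))
  * \det (\matrix_(i < k, j < k) ('C(c j, a i))%:R : 'M[R]_k).
Proof.
rewrite D_fact det_mulmx detW.
have hN : \det N = \det B * (-1)^+sig.
  by rewrite detB -mulrA -expr2 sqrr_sign mulr1.
rewrite hN -(submxK B) B_dl det_ublock det_ul det_dr sig_sign S_val prod_fact.
have h2 : (2 : R) != 0 by rewrite pnatr_eq0.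
rewrite [in RHS](eq_bigr (fun l : 'I_k => ((a l)`!%:R / 2^+(a l)) * ((-1)^+(l + b l) * (b l)`!%:R)
   * ((-1)^+(l + b l)) * ((l`! * (k + l)`!)%:R)^-1 * 2^+(c l))); last first.
  move=> l _; rewrite -aE expfzDr // -exprnP -exprnN natrM.
  have sq : ((-1)^+(l + b l) * (-1)^+(l + b l) : R) = 1 by rewrite -expr2 sqrr_sign.
  transitivity (((-1)^+(l + b l) * (-1)^+(l + b l)) *
    ((a l)`!%:R * (b l)`!%:R / (l`! * (k + l)`!)%:R * (2 ^+ c l * (2 ^+ a l)^-1)) : R).
    by rewrite sq mul1r natrM.
  ring.
rewrite !big_split /= !prodfV.
set P1 := \prod_(i < k) _; set P2 := \prod_(j < k) (2:R) ^+ c j.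
set P3 := \prod_(i < k) _; set P4 := \prod_(i < k) (-1) ^+ (i + b i).
set P5 := \prod_(i < k) _.
ring.
Qed.
End Main.

Theorem lemma6 (R : numFieldType) (k : nat) (e f : 'I_k -> int) :
  (1 <= k)%N ->
  (forall i, 0 <= shift e i) -> injective (shift e) ->
  (forall i, 0 <= shift f i < (k + k)%:Z) -> injective (shift f) ->
  let c := fun j : 'I_k => nth 0%N (compl_seq f) j in
  \det (Dmat R e f) =
  sgnf R f *
  (\prod_(l < k)
     ((((absz (shift e l))`! * (absz (shift f l))`!)%:R
        / ((l`! * (k + l)`!)%:R : R))
      * (2 : R) ^ ((c l)%:Z - shift e l)))
  * \det (\matrix_(i < k, j < k) ('C(c j, absz (shift e i)))%:R : 'M[R]_k).
Proof.
move=> _ e0 _ fb finj c.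
exact: (@main_sec R k e f e0 fb finj).
Qed.
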